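(* Let $d \geq 0$ be an integer and $\rho > 0$. Let $\mathsf{S}$ be a random sprinkle of density $\rho$ in $(1+d)$-dimensional Minkowski spacetime $\mathbb{M}^{1+d}$, regarded as a poset with the induced causal order. Then, with probability $1$, $\mathsf{S}$ is total locally unsymmetric; that is, almost surely, for every finite subset $F \subseteq \mathsf{S}$, every automorphism of the poset $\mathsf{S} \setminus F$ that moves only finitely many elements is the identity.
   Context: Minkowski spacetime $\mathbb{M}^{1+d} = \mathbb{R}^{1+d}$ with coordinates $(t, x_1,\dots,x_d)$, volume measure $\nu$ the Lebesgue measure, and causal partial order $p \preceq q$ iff $q - p$ is future-directed causal or zero (i.e. $q_0 - p_0 \geq \sqrt{\sum_{i=1}^d (q_i-p_i)^2}$). A sprinkle of density $\rho>0$ is a realisation of the Poisson point process on $\mathbb{M}^{1+d}$ with intensity $\rho\,\nu$: it is a random locally finite subset $\mathsf{S}$ (finite intersection with every compact set) such that for every precompact region $K$, the probability that $\mathsf{S}\cap K$ has exactly $n$ points is $e^{-\rho\nu(K)}\frac{(\rho\nu(K))^n}{n!}$, with points of disjoint regions independent (equivalently, for measurable $B_n$ in the space of $n$-point subsets of $K$, $\mu_K(B_n) = e^{-\rho\nu(K)}\frac{\rho^n}{n!}\nu^n(\Sigma_{K,n}^{-1}(B_n))$, where $\Sigma_{K,n}$ maps $n$-tuples of distinct points of $K$ to the corresponding $n$-element set). The sprinkle is a poset with the restriction of $\preceq$. For a poset $P$, an automorphism $\alpha$ of $P$ is a bijection $P\to P$ preserving and reflecting the order; an element $a$ is fixed if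 $\alpha(a)=a$. A local symmetry of $P$ is a non-identity automorphism of $P$ for which the set of non-fixed elements is finite. For $k \in \mathbb{N}_0$, a poset $P$ is $k$-stable locally unsymmetric if for every subset $S \subseteq P$ with $|S| \leq k$, the poset $P \setminus S$ (with the induced order) has no local symmetries. $P$ is total locally unsymmetric if it is $k$-stable locally unsymmetric for every finite $k \leq |P|$, i.e. removing any finite set of elements leaves a poset without local symmetries. *)

(* Defs.v *)
From HB Require Import structures.
From mathcomp Require Import all_boot all_order all_algebra.
From mathcomp Require Import all_classical all_reals all_analysis.
Set Implicit Arguments. Unset Strict Implicit. Unset Printing Implicit Defensive.
Import numFieldNormedType.Exports.
Import Order.TTheory GRing.Theory Num.Theory.
Local Open Scope classical_set_scope.
Local Open Scope ring_scope.

(* Points of Minkowski spacetime M^{1+d}: row vectors of length 1+d;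
   coordinate 0 is time t, coordinates 1..d are x_1..x_d. *)
Definition mpt (R : realType) (d : nat) := 'rV[R]_(d.+1).

Definition causal_le (R : realType) (d : nat) (p q : mpt R d) : Prop :=
  Num.sqrt (\sum_(i < d) (q ord0 (lift ord0 i) - p ord0 (lift ord0 i)) ^+ 2)
    <= q ord0 ord0 - p ord0 ord0.

Definition box (R : realType) (n : nat) (a b : 'rV[R]_n) : set 'rV[R]_n :=
  [set x | forall i, a ord0 i <= x ord0 i < b ord0 i].
Definition box_vol (R : realType) (n : nat) (a b : 'rV[R]_n) : R :=
  \prod_(i < n) Num.max (b ord0 i - a ord0 i) 0.

(* Lebesgue (outer) measure on R^n: infimum of total volume of countable box covers.
   On Borel sets this is the Lebesgue measure nu. *)
Definition leb_vol (R : realType) (n : nat) (A : set 'rV[R]_n) : \bar R :=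
  ereal_inf [set s : \bar R | exists a b : nat -> 'rV[R]_n,
     A `<=` \bigcup_k box (a k) (b k) /\
     s = (\sum_(0 <= k <oo) (box_vol (a k) (b k))%:E)%E].

Definition borel_set (R : realType) (n : nat) (K : set 'rV[R]_n) : Prop :=
  <<s open >> K.

Definition precompact_region (R : realType) (n : nat) (K : set 'rV[R]_n) : Prop :=
  borel_set K /\ compact (closure K).

Definition count_event (T : Type) (R : realType) (d : nat)
  (S : T -> set (mpt R d)) (K : set (mpt R d)) (n : nat) : set T :=
  [set w | ((S w `&` K) #= `I_n)%card].

(* Poisson point process (sprinkle) of intensity rho * nu on M^{1+d},
   realised on the probability space (Omega, P). *)
Definition is_sprinkle (R : realType) (d : nat) (rho : R)
  (dO : measure_display) (Omega : measurableType dO) (P : probability Omega R)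
  (S : Omega -> set (mpt R d)) : Prop :=
  (forall w K, compact K -> finite_set (S w `&` K)) /\
  (forall K n, precompact_region K ->
     measurable (count_event S K n) /\
     P (count_event S K n) =
       (expR (- (rho * fine (leb_vol K))) * (rho * fine (leb_vol K)) ^+ n
          / (n`!)%:R)%:E) /\
  (forall (m : nat) (K : 'I_m -> set (mpt R d)) (n : 'I_m -> nat),
     (forall i, precompact_region (K i)) ->
     (forall i j, i != j -> K i `&` K j = set0) ->
     P (\bigcap_i count_event S (K i) (n i)) =
       (\prod_(i < m) P (count_event S (K i) (n i)))%E).

Definition is_automorphism (R : realType) (d : nat) (X : set (mpt R d))
  (f : mpt R d -> mpt R d) : Prop :=
  [/\ (forall x, X x -> X (f x)),
      (forall x y, X x -> X y -> f x = f y -> x = y),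
      (forall y, X y -> exists2 x, X x & f x = y) &
      (forall x y, X x -> X y -> (causal_le x y <-> causal_le (f x) (f y)))].

Definition local_symmetry (R : realType) (d : nat) (X : set (mpt R d))
  (f : mpt R d -> mpt R d) : Prop :=
  [/\ is_automorphism X f,
      (exists2 x, X x & f x <> x) &
      finite_set [set x | X x /\ f x <> x]].

Definition k_stable_locally_unsymmetric (R : realType) (d : nat) (k : nat)
  (X : set (mpt R d)) : Prop :=
  forall F : set (mpt R d), F `<=` X -> (F #<= `I_k)%card ->
    forall f, ~ local_symmetry (X `\` F) f.

Definition total_locally_unsymmetric (R : realType) (d : nat)
  (X : set (mpt R d)) : Prop :=
  forall k : nat, k_stable_locally_unsymmetric k X.

(* Main.v *)
Require Import Defs.
From HB Require Import structures.
From mathcomp Require Import all_boot all_order all_algebra.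
From mathcomp Require Import all_classical all_reals all_analysis.
From mathcomp Require Import lra ring.
Import Order.TTheory GRing.Theory Num.Theory.
Import numFieldNormedType.Exports.
Local Open Scope classical_set_scope.
Local Open Scope ring_scope.
Set Implicit Arguments. Unset Strict Implicit. Unset Printing Implicit Defensive.

Lemma ballP (R : realType) n (c y : 'rV[R]_n) r : 0 < r ->
  ball c r y <-> forall i, `|c ord0 i - y ord0 i| < r.
Proof.
move=> r0; rewrite /ball /=; split.
- by move=> [_ H] i; have := H ord0 i.
- by move=> H; split => // i j; rewrite (ord1 i); exact: H.
Qed.

Lemma ball_precompact (R : realType) d (c : mpt R d) r : 0 < r ->
  precompact_region (ball c r).
Proof.
move=> r0; split.
  apply: sub_gen_smallest; exact: ball_open.
pose B := [set v : 'rV[R]_(d.+1) | forall i,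
   `[c ord0 i - r, c ord0 i + r]%classic (v ord0 i)].
have cB : compact B.
  apply: (@rV_compact _ _ (fun i => `[c ord0 i - r, c ord0 i + r]%classic)) => i.
  exact: segment_compact.
have clB : closed B by apply: compact_closed => //; exact: norm_hausdorff.
apply: (subclosed_compact _ cB); first exact: closed_closure.
rewrite (closure_id B).1 //; apply: closureS => y /(ballP _ _ r0) H i.
have := H i; rewrite ltr_distl => /andP[h1 h2].
rewrite /= in_itv /=; apply/andP; split.
  lra.
lra.
Qed.

Definition shift (R : realType) n (v : 'rV[R]_n) (A : set 'rV[R]_n) :=
  [set y | A (y - v)].

Lemma leb_vol_shift_sub (R : realType) n (v : 'rV[R]_n) (A : set 'rV[R]_n) :
  [set s : \bar R | exists a b : nat -> 'rV[R]_n,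
     A `<=` \bigcup_k box (a k) (b k) /\
     s = (\sum_(0 <= k <oo) (box_vol (a k) (b k))%:E)%E] `<=`
  [set s : \bar R | exists a b : nat -> 'rV[R]_n,
     shift v A `<=` \bigcup_k box (a k) (b k) /\
     s = (\sum_(0 <= k <oo) (box_vol (a k) (b k))%:E)%E].
Proof.
move=> s [a [b [cov ->]]].
exists (fun k => a k + v), (fun k => b k + v); split.
  move=> y /cov [k _ hk]; exists k => // i; have := hk i; rewrite !mxE => /andP[h1 h2].
  by apply/andP; split; lra.
have E k : box_vol (a k + v) (b k + v) = box_vol (a k) (b k).
  by apply: eq_bigr => i _; rewrite !mxE; congr (Num.max _ _); ring.
by rewrite (eq_eseriesr (fun k _ => congr1 EFin (E k))).
Qed.

Lemma shiftK (R : realType) n (v : 'rV[R]_n) (A : set 'rV[R]_n) :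
  shift (- v) (shift v A) = A.
Proof. by apply/seteqP; split => y; rewrite /shift /= opprK addrK. Qed.

Lemma leb_vol_shift (R : realType) n (v : 'rV[R]_n) (A : set 'rV[R]_n) :
  leb_vol (shift v A) = leb_vol A.
Proof.
rewrite /leb_vol; congr ereal_inf; apply/seteqP; split.
  by have := @leb_vol_shift_sub R n (- v) (shift v A); rewrite shiftK.
exact: leb_vol_shift_sub.
Qed.

Lemma ball_shift (R : realType) d (c : mpt R d) r : 0 < r ->
  ball c r = shift c (ball 0 r).
Proof.
move=> r0; apply/seteqP; split => y /=.
  move/(ballP _ _ r0) => H; apply/(ballP _ _ r0) => i.
  by rewrite !mxE sub0r normrN -normrN opprB.
move/(ballP _ _ r0) => H; apply/(ballP _ _ r0) => i.
by have := H i; rewrite !mxE sub0r normrN -normrN opprB.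
Qed.

Lemma count0_ball (R : realType) (d : nat) (rho : R)
  (dO : measure_display) (Omega : measurableType dO) (P : probability Omega R)
  (S : Omega -> set (mpt R d)) (c : mpt R d) r :
  is_sprinkle rho P S -> 0 < r ->
  measurable (count_event S (ball c r) 0) /\
  P (count_event S (ball c r) 0) =
    (expR (- (rho * fine (leb_vol (ball (0 : mpt R d) r)))))%:E.
Proof.
move=> [_ [hP _]] r0; have [m ->] := hP (ball c r) 0%N (ball_precompact c r0).
split => //; rewrite (ball_shift c r0) leb_vol_shift.
by rewrite expr0 mulr1 fact0 divr1.
Qed.

Lemma count0_empty (T : Type) (R : realType) d (S : T -> set (mpt R d)) K w :
  count_event S K 0 w <-> S w `&` K = set0.
Proof.
rewrite /count_event /= II0; split.
  by move=> h; apply/eqP; rewrite -(@card_eq0 _ nat).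
by move=> ->; rewrite (@card_eq0 _ nat) eqxx.
Qed.

Lemma degenerate_ball (R : realType) (d : nat) (rho : R) (hrho : 0 < rho)
  (dO : measure_display) (Omega : measurableType dO) (P : probability Omega R)
  (S : Omega -> set (mpt R d)) (c : mpt R d) r :
  is_sprinkle rho P S -> 0 < r ->
  fine (leb_vol (ball (0 : mpt R d) r)) <= 0 ->
  P.-negligible [set w | S w `&` ball c r !=set0].
Proof.
move=> hS r0 v0; have [mA PA] := count0_ball c hS r0.
exists (~` count_event S (ball c r) 0); split.
- exact: measurableC.
- have le1 := probability_le1 P mA; rewrite PA lee_fin in le1.
  have ge1 := expR_ge1Dx (- (rho * fine (leb_vol (ball (0 : mpt R d) r)))).
  have h0 : 0 <= - (rho * fine (leb_vol (ball (0 : mpt R d) r))).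
    by rewrite oppr_ge0 mulr_ge0_le0 // ltW.
  rewrite probability_setC // PA -EFinB; congr EFin; lra.
- move=> w [y hy] /count0_empty h; by rewrite h in hy.
Qed.

Lemma small_bound (R : realType) (x : \bar R) (a : R) : 0 < a ->
  (0 <= x)%E -> (forall m : nat, (x <= ((1 + a * m%:R)^-1)%:E)%E) -> x = 0%E.
Proof.
move=> a0 x0 hx.
have xfin : x \is a fin_num.
  by rewrite ge0_fin_numE //; apply: le_lt_trans (hx 0%N) _; rewrite ltry.
rewrite -(fineK xfin) in x0 hx *; move: (fine x) x0 hx => e e0 he.
rewrite lee_fin in e0; apply/eqP; rewrite eqe; rewrite eq_le e0 andbT.
apply/negP => /negP; rewrite -ltNge => epos.
have b0 : 0 <= (a * e)^-1 by rewrite invr_ge0 mulr_ge0 // ltW.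
have hb := archi_boundP b0.
set m := Num.Def.archi_bound _ in hb.
have := he m; rewrite lee_fin => hm.
have p0 : 0 < 1 + a * m%:R by rewrite ltr_pwDl // mulr_ge0 // ltW.
rewrite -[X in _ <= X]mul1r ler_pdivlMr // in hm.
rewrite -[X in X < _]mul1r ltr_pdivrMr ?mulr_gt0 // in hb.
nra.
Qed.

Lemma nondeg_negligible (R : realType) (d : nat) (rho : R) (hrho : 0 < rho)
  (dO : measure_display) (Omega : measurableType dO) (P : probability Omega R)
  (S : Omega -> set (mpt R d)) (c : nat -> mpt R d) r :
  is_sprinkle rho P S -> 0 < r ->
  0 < fine (leb_vol (ball (0 : mpt R d) r)) ->
  (forall i j, i != j -> ball (c i) r `&` ball (c j) r = set0) ->
  P.-negligible (\bigcap_i count_event S (ball (c i) r) 0).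
Proof.
move=> hS r0 v0 disj.
set v := fine _ in v0.
have mA i := (count0_ball (c i) hS r0).1.
apply/negligibleP; first exact: bigcapT_measurable.
apply: (@small_bound _ _ (rho * v)); first by rewrite mulr_gt0.
  exact: measure_ge0.
move=> m.
have hind := hS.2.2 m (fun i : 'I_m => ball (c i) r) (fun=> 0%N)
  (fun i => ball_precompact (c i) r0).
have /hind {}hind : forall i j : 'I_m, i != j ->
    ball (c i) r `&` ball (c j) r = set0.
  by move=> i j ij; apply: disj.
apply: (@le_trans _ _ (P (\bigcap_(i : 'I_m) count_event S (ball (c i) r) 0))).
  apply: (le_measure P); rewrite ?inE.
  - exact: bigcapT_measurable.
  - by apply: fin_bigcap_measurable; [exact: finite_finset | move=> i _; exact: mA].
  by move=> w hw i _; exact: hw.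
rewrite hind.
under eq_bigr do rewrite (count0_ball _ hS r0).2 -/v.
rewrite prodEFin lee_fin prodr_const card_ord -expRM_natr.
have p0 : 0 < 1 + rho * (v * m%:R).
  by apply: (@lt_le_trans _ _ 1) => //; rewrite lerDl mulr_ge0 ?mulr_ge0 // ltW.
rewrite mulNr -mulrA expRN lef_pV2 ?posrE ?expR_gt0 //.
exact: expR_ge1Dx.
Qed.

Lemma negligible_bigcup_count (R : realType)
  (dO : measure_display) (Omega : measurableType dO) (P : probability Omega R)
  (I : countType) (F : I -> set Omega) :
  (forall i, P.-negligible (F i)) -> P.-negligible (\bigcup_i F i).
Proof.
move=> hF.
apply: (@negligibleS _ _ _ _ (\bigcup_n (if unpickle n is Some i then F i else set0))).
  by move=> w [i _ hi]; exists (pickle i) => //; rewrite pickleK.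
apply: negligible_bigcup => n; case: (unpickle n) => [i|] //.
exact: negligible_set0.
Qed.

Lemma tlu_of_sep (R : realType) d (X : set (mpt R d)) :
  (forall x x' E, X x -> X x' -> x <> x' -> finite_set E ->
     exists y, [/\ X y, ~ E y & ~ (causal_le x y <-> causal_le x' y)]) ->
  total_locally_unsymmetric X.
Proof.
move=> hsep k F FX Fk f [[hXf hinj hsurj hord] [x Xx fx] fin].
have Ffin : finite_set F := card_le_finite Fk (finite_II k).
pose E := F `|` [set z | (X `\` F) z /\ f z <> z].
have Efin : finite_set E by rewrite /E finite_setU.
have [y [Xy Ey hy]] := hsep x (f x) E Xx.1 (hXf x Xx).1 (fun h => fx (esym h)) Efin.
have yF : ~ F y by move=> h; apply: Ey; left.
have fy : f y = y.
  by apply: contrapT => h; apply: Ey; right; split.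
apply: hy; rewrite (hord x y Xx (conj Xy yF)) fy; done.
Qed.

Lemma finite_min (R : realType) (T : eqType) (A : set T) (g : T -> R) :
  finite_set A -> A !=set0 -> exists2 m, A m & forall z, A z -> g m <= g z.
Proof.
move=> /finite_seqP [s ->] [x0 hx0].
have : x0 \in s by [].
move: x0 {hx0}; elim: s => [//|a s IH] x0 _.
case: s IH => [|b s] IH.
  exists a; first by rewrite /= inE.
  by move=> z; rewrite /= inE => /eqP ->.
have [m hm hmin] := IH b (mem_head b s).
have [ga|ga] := leP (g a) (g m).
  exists a; first by rewrite /= inE eqxx.
  move=> z; rewrite /= inE => /orP[/eqP -> //|hz].
  exact: le_trans ga (hmin z hz).
exists m; first by rewrite /= inE hm orbT.
move=> z; rewrite /= inE => /orP[/eqP -> |hz]; first exact: ltW.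
exact: hmin.
Qed.

Lemma causal0 (R : realType) (p q : mpt R 0) :
  causal_le p q <-> p ord0 ord0 <= q ord0 ord0.
Proof. by rewrite /causal_le big_ord0 sqrtr0 subr_ge0. Qed.

Lemma tlu_d0 (R : realType) (X : set (mpt R 0)) : total_locally_unsymmetric X.
Proof.
move=> k F FX Fk f [[hXf hinj hsurj hord] [x Xx fx] fin].
pose g (p : mpt R 0) := p ord0 ord0.
have [m [Mm fm] hmin] := @finite_min R _ _ g fin (ex_intro _ x (conj Xx fx)).
have [z Xz fz] := hsurj m Mm.
have zm : z <> m by move=> h; apply: fm; rewrite -{1}h fz.
have gmz : g m <= g z by apply: hmin; split => //; rewrite fz => h; apply: zm.
have Xfm := hXf m Mm.
have ffm : f (f m) <> f m by move=> /(hinj _ _ Xfm Mm).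
have gmfm : g m <= g (f m) by apply: hmin.
have : causal_le m z by rewrite causal0.
rewrite (hord m z Mm Xz) fz causal0 -/(g _) -/(g _) => h.
apply: fm; apply/matrixP => i j; rewrite (ord1 i) (ord1 j).
by apply/eqP; rewrite eq_le h gmfm.
Qed.

Lemma geo_core (R : realType) d' (a b y : mpt R d'.+1) (j : 'I_d'.+1)
  (sg r I z0 : R) (Z : 'I_d'.+1 -> R) :
  sg ^+ 2 = 1 -> 0 < r -> 0 <= I ->
  y ord0 ord0 = a ord0 ord0 + I + z0 ->
  (forall k, y ord0 (lift ord0 k) =
     a ord0 (lift ord0 k) + (if k == j then I * sg else 0) + Z k) ->
  (forall k, `|Z k| < 2 * r) ->
  2 * (d'.+1%:R + 1) * r < z0 -> z0 < 2 * (d'.+1%:R + 1) * r + 3 * r ->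
  (2 * d'.+1%:R + 7) * r <=
    sg * (a ord0 (lift ord0 j) - b ord0 (lift ord0 j))
    + b ord0 ord0 - a ord0 ord0 ->
  causal_le a y /\ ~ causal_le b y.
Proof.
move=> sg2 r0 I0 hy0 hyk hZ hz1 hz2 hdelta.
set D : R := d'.+1%:R.
have D1 : 1 <= D by rewrite /D ler1n.
have hsgn : `|sg| = 1.
  by apply/eqP; rewrite -(@eqrXn2 _ 2) ?normr_ge0 // real_normK ?sg2 ?expr1n //
    num_real.
set P := sg * Z j.
have hP : `|P| < 2 * r by rewrite /P normrM hsgn mul1r.
move: hP; rewrite ltr_norml => /andP[hP1 hP2].
split.
- rewrite /causal_le (bigD1 j) //= hyk eqxx.
  have -> : a ord0 (lift ord0 j) + I * sg + Z j - a ord0 (lift ord0 j) = I * sg + Z j by ring.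
  have hrest : \sum_(i < d'.+1 | i != j) (y ord0 (lift ord0 i) - a ord0 (lift ord0 i)) ^+ 2
      <= D * (2 * r) ^+ 2.
    rewrite big_mkcond /=.
    apply: (@le_trans _ _ (\sum_(i < d'.+1) (2 * r) ^+ 2)).
      apply: ler_sum => i _; case: ifPn => [ij|_]; last by rewrite sqr_ge0.
      rewrite hyk (negbTE ij) addr0.
      have -> : a ord0 (lift ord0 i) + Z i - a ord0 (lift ord0 i) = Z i by ring.
      have := hZ i; rewrite ltr_norml => /andP[z1 z2]; nra.
    by rewrite sumr_const cardT size_enum_ord /D [X in _ <= X]mulr_natl.
  have e1 : (I * sg + Z j) ^+ 2 = (I + P) ^+ 2.
    rewrite /P; have : (I * sg + Z j) ^+ 2 - (I + sg * Z j) ^+ 2 =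
      (sg ^+ 2 - 1) * (I ^+ 2 - Z j ^+ 2) by ring.
    by rewrite sg2 subrr mul0r => /eqP; rewrite subr_eq0 => /eqP.
  apply: (@le_trans _ _ (Num.sqrt ((I + P) ^+ 2 + D * (2 * r) ^+ 2))).
    by apply: ler_wsqrtr; apply: lerD => //; rewrite e1.
  rewrite hy0.
  have -> : a ord0 ord0 + I + z0 - a ord0 ord0 = I + z0 by ring.
  have hIz : 0 <= I + z0 by rewrite -/D in hz1; nra.
  rewrite -[X in _ <= X]ger0_norm //.
  rewrite -sqrtr_sqr; apply: ler_wsqrtr.
  have h1 : 0 <= z0 - P - D * (2 * r) by nra.
  have h2 : 0 <= 2 * I + z0 + P - D * (2 * r) by nra.
  have h4 : 0 <= (D - 1) * (D * (2 * r) ^+ 2).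
    by apply: mulr_ge0; [lra | apply: mulr_ge0; [lra | exact: sqr_ge0]].
  have -> : (I + z0) ^+ 2 = (I + P) ^+ 2 + (z0 - P) * (2 * I + z0 + P) by ring.
  rewrite lerD2l.
  have key : forall u v e f : R, 0 <= u - e -> 0 <= v - e -> 0 <= e ->
      f <= e ^+ 2 -> f <= u * v.
    move=> u v e f hu hv he hf.
    have : 0 <= (u - e) * (v - e) by exact: mulr_ge0.
    have : 0 <= (u - e) * e by exact: mulr_ge0.
    have : 0 <= (v - e) * e by exact: mulr_ge0.
    nra.
  apply: key h1 h2 _ _.
    by apply: mulr_ge0; lra.
  have -> : (D * (2 * r)) ^+ 2 = D * (2 * r) ^+ 2 + (D - 1) * (D * (2 * r) ^+ 2) by ring.
  by rewrite lerDl.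
- rewrite /causal_le => hb.
  have hsq : (y ord0 (lift ord0 j) - b ord0 (lift ord0 j)) ^+ 2 <=
      \sum_(i < d'.+1) (y ord0 (lift ord0 i) - b ord0 (lift ord0 i)) ^+ 2.
    rewrite (bigD1 j) //= lerDl; apply: sumr_ge0 => i _; exact: sqr_ge0.
  have := le_trans (ler_wsqrtr hsq) hb; rewrite sqrtr_sqr => hb2.
  have hs : sg * (y ord0 (lift ord0 j) - b ord0 (lift ord0 j)) <=
      `|y ord0 (lift ord0 j) - b ord0 (lift ord0 j)|.
    by apply: le_trans (ler_norm _) _; rewrite normrM hsgn mul1r.
  have := le_trans hs hb2; rewrite hyk eqxx hy0 => h.
  have e2 : sg * (a ord0 (lift ord0 j) + I * sg + Z j - b ord0 (lift ord0 j)) =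
      sg * (a ord0 (lift ord0 j) - b ord0 (lift ord0 j)) + I * sg ^+ 2 + P.
    by rewrite /P; ring.
  rewrite e2 sg2 mulr1 in h.
  nra.
Qed.

Definition rad (R : realType) (k : nat) : R := (k.+2%:R)^-1.
Definition sgn (R : realType) (s : bool) : R := if s then -1 else 1.
Definition dir (R : realType) d (j : 'I_d) (s : bool) (m : 'I_d.+1) : R :=
  if unlift ord0 m is Some k then (if k == j then sgn R s else 0) else 1.
Definition Idx d := (nat * 'I_d * bool * {ffun 'I_d.+1 -> int})%type.
Definition cen (R : realType) d (q : Idx d) (i : nat) : mpt R d :=
  \row_m (rad R q.1.1.1 * (q.2 m)%:~R + i%:R * dir R q.1.1.2 q.1.2 m).

Lemma rad_gt0 (R : realType) k : 0 < rad R k.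
Proof. by rewrite /rad invr_gt0 ltr0n. Qed.

Lemma sgn2 (R : realType) s : sgn R s ^+ 2 = 1.
Proof. by case: s; rewrite /sgn ?sqrrN expr1n. Qed.

Lemma geo_cen (R : realType) d' (a b : mpt R d'.+1) (j : 'I_d'.+1) (s : bool)
  (k : nat) (g : {ffun 'I_d'.+2 -> int}) :
  let r := rad R k in let D : R := d'.+1%:R in let w := 2 * (D + 1) * r in
  (2 * D + 7) * r <=
    sgn R s * (a ord0 (lift ord0 j) - b ord0 (lift ord0 j))
    + b ord0 ord0 - a ord0 ord0 ->
  a ord0 ord0 + w + r < r * (g ord0)%:~R <= a ord0 ord0 + w + 2 * r ->
  (forall k', a ord0 (lift ord0 k') - r < r * (g (lift ord0 k'))%:~R
     <= a ord0 (lift ord0 k')) ->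
  forall i y, ball (cen R (k, j, s, g) i) r y -> causal_le a y /\ ~ causal_le b y.
Proof.
move=> r D w hdelta /andP[g01 g02] hg i y /(ballP _ _ (rad_gt0 R k)) hy.
have r0 : 0 < r := rad_gt0 R k.
set I : R := i%:R.
set Z := (fun k' => y ord0 (lift ord0 k') - a ord0 (lift ord0 k')
      - (if k' == j then I * sgn R s else 0)).
have hyk : forall k', y ord0 (lift ord0 k') =
     a ord0 (lift ord0 k') + (if k' == j then I * sgn R s else 0) + Z k'.
  by move=> k'; rewrite /Z; ring.
have hZ : forall k', `|Z k'| < 2 * r.
  move=> k'; have := hy (lift ord0 k'); have := hg k'.
  rewrite /cen mxE /= /dir liftK -/I => /andP[h1 h2] h.
  rewrite /Z; move: h; case: (k' == j) => /= h; move: h; rewrite ltr_distl => /andP[h3 h4];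
    rewrite ltr_norml; apply/andP; split; rewrite -/r in h3 h4; lra.
have := hy ord0; rewrite /cen mxE /= /dir unlift_none mulr1 ltr_distl -/I -/r => /andP[h3 h4].
apply: (@geo_core R d' a b y j (sgn R s) r I (y ord0 ord0 - a ord0 ord0 - I) Z
  (sgn2 R s) r0 (ler0n _ _) _ hyk hZ).
- by ring.
- rewrite /w in g01 g02; lra.
- rewrite /w in g01 g02; lra.
- by rewrite -/D.
Qed.

Lemma sep_dir (R : realType) d' (x x' : mpt R d'.+1) : x <> x' ->
  exists (a b : mpt R d'.+1) (j : 'I_d'.+1) (s : bool),
    ((a = x /\ b = x') \/ (a = x' /\ b = x)) /\
    0 < sgn R s * (a ord0 (lift ord0 j) - b ord0 (lift ord0 j))
        + b ord0 ord0 - a ord0 ord0.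
Proof.
move=> xx'.
have key : forall a b : mpt R d'.+1, a ord0 ord0 < b ord0 ord0 ->
    exists s, 0 < sgn R s * (a ord0 (lift ord0 ord0) - b ord0 (lift ord0 ord0))
        + b ord0 ord0 - a ord0 ord0.
  move=> a b ab; exists (a ord0 (lift ord0 ord0) < b ord0 (lift ord0 ord0)).
  rewrite /sgn; case: (ltP (a ord0 (lift ord0 ord0)) (b ord0 (lift ord0 ord0))) => h; lra.
have [h|h|h] := ltgtP (x ord0 ord0) (x' ord0 ord0).
- have [s hs] := key _ _ h; by exists x, x', ord0, s; split => //; left.
- have [s hs] := key _ _ h; by exists x', x, ord0, s; split => //; right.
- have [m hm] : exists m, x ord0 m <> x' ord0 m.
    apply: contrapT => hn; apply: xx'; apply/matrixP => i k.
    rewrite (ord1 i); apply: contrapT => hk; apply: hn; by exists k.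
  case: (unliftP ord0 m) hm => [j -> | ->] hm; last by rewrite h in hm.
  exists x, x', j, (x ord0 (lift ord0 j) < x' ord0 (lift ord0 j)); split; first by left.
  rewrite h /sgn; case: (ltP (x ord0 (lift ord0 j)) (x' ord0 (lift ord0 j))) => h2.
    lra.
  have : x ord0 (lift ord0 j) != x' ord0 (lift ord0 j) by apply/eqP.
  rewrite neq_lt => /orP[h3|h3]; lra.
Qed.

Lemma geo_exists (R : realType) d' (x x' : mpt R d'.+1) : x <> x' ->
  exists q : Idx d'.+1, forall i y, ball (cen R q i) (rad R q.1.1.1) y ->
    ~ (causal_le x y <-> causal_le x' y).
Proof.
move=> /sep_dir [a [b [j [s [hab hdelta]]]]].
set delta := _ - _ in hdelta.
set D : R := d'.+1%:R.
have D0 : 0 <= D by rewrite /D ler0n.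
have b0 : 0 <= (2 * D + 7) / delta by apply: divr_ge0; lra.
have hb := archi_boundP b0.
set k := Num.Def.archi_bound _ in hb.
pose r := rad R k.
have r0 : 0 < r := rad_gt0 R k.
have hk : (2 * D + 7) * r <= delta.
  rewrite /r /rad -/(_ / _) ler_pdivrMr ?ltr0n //.
  have e : 2 * D + 7 = delta * ((2 * D + 7) / delta).
    by rewrite mulrCA divff ?mulr1 // gt_eqF.
  have hk2 : (k%:R : R) <= k.+2%:R by rewrite ler_nat (leq_trans (leqnSn k) (leqnSn _)).
  rewrite [X in X <= _]e; nra.
pose w := 2 * (D + 1) * r.
pose g : {ffun 'I_d'.+2 -> int} := [ffun m => if unlift ord0 m is Some k' then
    Num.floor (a ord0 (lift ord0 k') / r)
  else Num.floor ((a ord0 ord0 + w + r) / r) + 1].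
exists (k, j, s, g) => i y hy.
have hr : forall X : R, r * X / r = X.
  by move=> X; rewrite mulrC mulrA mulVf ?mul1r // gt_eqF.
have hg0 : a ord0 ord0 + w + r < r * (g ord0)%:~R <= a ord0 ord0 + w + 2 * r.
  rewrite ffunE unlift_none -/w -/r.
  set X := (a ord0 ord0 + w + r) / r.
  have h1 := floor_le X; have h2 := floorD1_gt X.
  have eX : r * X = a ord0 ord0 + w + r by rewrite /X mulrC divfK // gt_eqF.
  rewrite intrD /=; apply/andP; split; nra.
have hgk : forall k', a ord0 (lift ord0 k') - r < r * (g (lift ord0 k'))%:~R
     <= a ord0 (lift ord0 k').
  move=> k'; rewrite ffunE liftK -/r.
  set X := a ord0 (lift ord0 k') / r.
  have h1 := floor_le X; have h2 := floorD1_gt X.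
  have eX : r * X = a ord0 (lift ord0 k') by rewrite /X mulrC divfK // gt_eqF.
  rewrite intrD /= in h2; apply/andP; split; nra.
have [ha hb'] := @geo_cen R d' a b j s k g hk hg0 hgk i y hy.
case: hab => [[ea eb]|[ea eb]] h; subst a b.
  by apply: hb'; apply/h.
by apply: hb'; apply/h.
Qed.

Lemma finite_ub (R : realType) d (E : set (mpt R d)) :
  finite_set E -> exists T : R, forall e, E e -> e ord0 ord0 <= T.
Proof.
move=> Efin; have [[e0 he0]|E0] := pselect (E !=set0).
  have [m Em hm] := @finite_min R _ E (fun p : mpt R d => - p ord0 ord0) Efin
    (ex_intro _ e0 he0).
  by exists (m ord0 ord0) => e /hm; rewrite lerN2.
exists 0 => e Ee; exfalso; apply: E0; by exists e.
Qed.

Lemma cen_disj (R : realType) d (q : Idx d) (i j : nat) : i != j ->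
  ball (cen R q i) (rad R q.1.1.1) `&` ball (cen R q j) (rad R q.1.1.1) = set0.
Proof.
move=> ij; apply/seteqP; split => // y [/(ballP _ _ (rad_gt0 R _)) h1 /(ballP _ _ (rad_gt0 R _)) h2].
have := h1 ord0; have := h2 ord0.
rewrite /cen !mxE /dir unlift_none !mulr1.
have r2 : rad R q.1.1.1 <= 2^-1.
  by rewrite /rad lef_pV2 ?posrE ?ltr0n // ler_nat.
set r := rad R _ in r2 *.
set c := r * _.
rewrite !ltr_distl => /andP[a1 a2] /andP[a3 a4].
have : (i < j)%N \/ (j < i)%N.
  by move: ij; rewrite neq_ltn => /orP.
case=> h.
  have : (i.+1%:R : R) <= j%:R by rewrite ler_nat.
  rewrite -addn1 natrD; lra.
have : (j.+1%:R : R) <= i%:R by rewrite ler_nat.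
rewrite -addn1 natrD; lra.
Qed.

Unset Implicit Arguments.

Theorem mainTheorem1 (R : realType) (d : nat) (rho : R) (hrho : 0 < rho)
  (dO : measure_display) (Omega : measurableType dO) (P : probability Omega R)
  (S : Omega -> set (mpt R d)) :
  is_sprinkle rho P S ->
  P.-negligible [set w | ~ total_locally_unsymmetric (S w)].
Proof.
case: d S => [|d'] S hS.
  apply: (@negligibleS _ _ _ _ set0); last exact: negligible_set0.
  by move=> w /= h; apply: h; exact: tlu_d0.
have [[k hk]|hnd] := pselect (exists k, fine (leb_vol (ball (0 : mpt R d'.+1) (rad R k))) <= 0).
  pose r := rad R k.
  have r0 : 0 < r := rad_gt0 R k.
  pose c0 (g : {ffun 'I_d'.+2 -> int}) : mpt R d'.+1 := \row_m (r * (g m)%:~R).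
  apply: (@negligibleS _ _ _ _
    (\bigcup_(g : {ffun 'I_d'.+2 -> int}) [set w | S w `&` ball (c0 g) r !=set0])).
    move=> w /= hw.
    have [x Sx] : S w !=set0.
      apply: contrapT => hn; apply: hw => kk F FX _ f [_ [x Xx _] _].
      by apply: hn; exists x; exact: Xx.1.
    exists [ffun m => Num.floor (x ord0 m / r)] => //.
    exists x; split => //; apply/(ballP _ _ r0) => m.
    rewrite /c0 mxE ffunE.
    set X := x ord0 m / r.
    have h1 := floor_le X; have h2 := floorD1_gt X.
    have eX : r * X = x ord0 m by rewrite /X mulrC divfK // gt_eqF.
    rewrite intrD /= in h2; rewrite ltr_distl; apply/andP; split; nra.
  apply: negligible_bigcup_count => g.
  exact: (degenerate_ball hrho (c0 g) hS r0 hk).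
have hv : forall k, 0 < fine (leb_vol (ball (0 : mpt R d'.+1) (rad R k))).
  by move=> k; rewrite ltNge; apply/negP => h; apply: hnd; exists k.
apply: (@negligibleS _ _ _ _
  (\bigcup_(q : Idx d'.+1) \bigcup_(N : nat) \bigcap_(i : nat)
     count_event S (ball (cen R q (N + i)) (rad R q.1.1.1)) 0)).
  move=> w /= hw; apply: contrapT => hn; apply: hw.
  apply: tlu_of_sep => x x' E Xx Xx' xx' Efin.
  have [q hq] := geo_exists xx'.
  have [T hT] := finite_ub Efin.
  set r := rad R q.1.1.1.
  set c := cen R q 0 ord0 ord0.
  have b0 : 0 <= `|T - c + r| by [].
  have hN := archi_boundP b0.
  set N := Num.Def.archi_bound _ in hN.
  have : ~ (\bigcap_(i : nat) count_event S (ball (cen R q (N + i)) r) 0) w.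
    by move=> h; apply: hn; exists q => //; exists N.
  move=> /existsNP [i /= hi].
  have : ~ (S w `&` ball (cen R q (N + i)) r = set0).
    move=> h; apply: hi => _; exact/count0_empty.
  move=> /eqP /set0P [y [Sy By]].
  exists y; split => //; last exact: hq By.
  move=> Ey; have := hT y Ey.
  move: By => /(ballP _ _ (rad_gt0 R _)) /(_ ord0).
  rewrite /cen !mxE /dir unlift_none !mulr1 => hy.
  have ec : c = r * (q.2 ord0)%:~R.
    by rewrite /c /cen mxE /dir unlift_none mulr1 mulr0n addr0.

  rewrite ltr_distl in hy; move/andP: hy => [hy1 hy2].
  have hNi : (N%:R : R) <= (N + i)%:R by rewrite ler_nat leq_addr.
  have := ler_norm (T - c + r).
  rewrite -/r in hy1 hy2; lra.
apply: negligible_bigcup_count => q.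
apply: negligible_bigcup => N.
apply: (@nondeg_negligible R d'.+1 rho hrho dO Omega P S (fun i => cen R q (N + i)) _ hS (rad_gt0 R _) (hv _)).
move=> i j ij; apply: cen_disj.
by rewrite eqn_add2l.
Qed.
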